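(* Let $a,b,k\in\mathbb{N}$ with $k\le\min(a,b)$. Then $\mathcal{D}_k([a]\times[b])\cong\mathcal{C}(a,k)\times\mathcal{C}(b,k)$ as posets.
   Context: $[n]=\{1,\dots,n\}$ and $\mathbb{Z}_+^2$ carries the product order. A Ferrers diagram is a finite order ideal of $\mathbb{Z}_+^2$. The Durfee length of a Ferrers diagram $D$ is the largest $k\in\mathbb{N}$ with $[k]\times[k]\subseteq D$. $\mathcal{D}_k([a]\times[b])$ is the set of Ferrers diagrams of Durfee length exactly $k$ contained in $[a]\times[b]$, ordered by inclusion. For $k\le n$, $\mathcal{C}(n,k)$ is the set of $k$-element subsets of $[n]$, each written as an increasing sequence $(x_1<\dots<x_k)$, with $\mathbf{x}\le\mathbf{y}$ iff $x_i\le y_i$ for all $i$; products of posets carry the product order. *)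

(* Defs.v *)
From mathcomp Require Import all_boot.
Set Implicit Arguments. Unset Strict Implicit. Unset Printing Implicit Defensive.

(* Cells of [a] x [b] are encoded as pairs (x, y) : 'I_a * 'I_b, where the
   ordinal x (value 0..a-1) stands for the element x+1 of [a]. *)

Definition ferrers (a b : nat) (D : {set 'I_a * 'I_b}) : Prop :=
  forall (x x' : 'I_a) (y y' : 'I_b),
    (x, y) \in D -> (x' <= x)%N -> (y' <= y)%N -> (x', y') \in D.

Definition square_in (a b : nat) (D : {set 'I_a * 'I_b}) (m : nat) : Prop :=
  forall i j : nat, (i < m)%N -> (j < m)%N ->
    exists (x : 'I_a) (y : 'I_b), nat_of_ord x = i /\ nat_of_ord y = j /\ (x, y) \in D.

Definition durfee_length_is (a b : nat) (D : {set 'I_a * 'I_b}) (k : nat) : Prop :=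
  square_in D k /\ forall m, square_in D m -> (m <= k)%N.

Definition Dk (a b k : nat) : Type :=
  {D : {set 'I_a * 'I_b} | ferrers D /\ durfee_length_is D k}.

Definition Dk_le (a b k : nat) (D E : Dk a b k) : Prop := proj1_sig D \subset proj1_sig E.

(* C(n,k): k-element subsets of [n], written as increasing sequences
   x_1 < ... < x_k of elements of [n] = {1..n}. *)
Definition Ck (n k : nat) : Type :=
  {x : k.-tuple nat | sorted ltn x /\ all (fun v => (1 <= v <= n)%N) x}.

Definition Ck_le (n k : nat) (x y : Ck n k) : Prop :=
  forall i : 'I_k, (tnth (proj1_sig x) i <= tnth (proj1_sig y) i)%N.

Definition CC_le (a b k : nat) (p q : Ck a k * Ck b k) : Prop :=
  Ck_le p.1 q.1 /\ Ck_le p.2 q.2.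

Definition poset_iso (S T : Type) (leS : S -> S -> Prop) (leT : T -> T -> Prop) : Prop :=
  exists f : S -> T, bijective f /\ forall s1 s2, leS s1 s2 <-> leT (f s1) (f s2).

(* Main.v *)
Require Import Defs.
From mathcomp Require Import all_boot zify.
From Stdlib Require Import ProofIrrelevance.

Lemma seqL1 (s : seq nat) i d : sorted ltn s -> i + d < size s ->
  nth 0 s i + d <= nth 0 s (i + d).
Proof.
move=> /sortedP H; elim: d => [|d IH] hd; first by rewrite !addn0.
have := H 0 (i + d); rewrite -addnS => /(_ hd) h1.
have := IH ltac:(lia). move: h1; rewrite /ltn /=; lia.
Qed.

Lemma seqL2 (s : seq nat) n i : sorted ltn s -> all (fun v => 1 <= v <= n) s ->
  i < size s -> i < nth 0 s i.
Proof.
move=> hs ha hi; have := seqL1 s 0 i hs; rewrite add0n => /(_ hi).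
have : 0 < size s by lia.
case: s hs ha hi => [|x s] //= _ /andP[/andP[h1 _] _] _ _; lia.
Qed.

Lemma seqL3 (s : seq nat) n i : sorted ltn s -> all (fun v => 1 <= v <= n) s ->
  i < size s -> nth 0 s i + (size s).-1 - i <= n.
Proof.
move=> hs ha hi; have := seqL1 s i ((size s).-1 - i) hs.
have e : i + ((size s).-1 - i) = (size s).-1 by lia.
have hh : i + ((size s).-1 - i) < size s by lia.
move=> /(_ hh); rewrite e.
have : (size s).-1 < size s by lia.
move=> /(mem_nth 0) /(allP ha) /andP[_ h] h2. have h3 : nth 0 s (size s).-1 <= n := h. lia.
Qed.

Lemma card_lt b n : n <= b -> #|[set y : 'I_b | y < n]| = n.
Proof.
move=> hn.
have -> : [set y : 'I_b | y < n] = widen_ord hn @: [set: 'I_n].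
  apply/setP => y; rewrite inE; apply/idP/imsetP => [hy|[z _ ->]].
    by exists (Ordinal hy) => //; apply: val_inj.
  by rewrite /= ltn_ord.
have wi : injective (widen_ord hn) by move=> x1 x2 h; apply: val_inj; exact: (congr1 val h).
rewrite (card_imset _ wi). by rewrite cardsT card_ord.
Qed.
Set Implicit Arguments. Unset Strict Implicit. Unset Printing Implicit Defensive.

Definition row a b (D : {set 'I_a * 'I_b}) (x : nat) : {set 'I_b} :=
  [set y | [exists x' : 'I_a, (x' == x :> nat) && ((x', y) \in D)]].
Definition ell a b (D : {set 'I_a * 'I_b}) x := #|row D x|.
Definition tr a b (D : {set 'I_a * 'I_b}) : {set 'I_b * 'I_a} :=
  [set p | (p.2, p.1) \in D].

Lemma in_row a b (D : {set 'I_a * 'I_b}) (x : 'I_a) y : (y \in row D x) = ((x, y) \in D).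
Proof.
rewrite inE; apply/existsP/idP => [[x' /andP[/eqP e h]]|h]; last by exists x; rewrite eqxx.
by have -> : x = x' by apply: val_inj.
Qed.

Lemma ferrers_row a b (D : {set 'I_a * 'I_b}) (x : 'I_a) (y : 'I_b) :
  ferrers D -> ((x, y) \in D) = (y < ell D x).
Proof.
move=> hf; apply/idP/idP => h.
- have hy : y.+1 <= b by exact: ltn_ord.
  rewrite /ell -{1}(card_lt _ _ hy); apply: subset_leq_card; apply/subsetP => z.
  rewrite inE ltnS in_row => hz; exact: hf h _ _.
- apply/negP => /negP hn; move: h; apply/negP; rewrite -leqNgt.
  rewrite -[X in _ <= X](card_lt _ _ (ltnW (ltn_ord y))); apply: subset_leq_card; apply/subsetP => z.
  rewrite in_row inE => hz; rewrite ltnNge; apply/negP => hyz.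
  by move/negP: hn; apply; exact: hf hz _ _.
Qed.

Lemma row_mono a b (D : {set 'I_a * 'I_b}) x x' : ferrers D -> x <= x' ->
  row D x' \subset row D x.
Proof.
move=> hf hx; apply/subsetP => y; rewrite !inE => /existsP[z /andP[/eqP e h]].
have hxa : x < a by rewrite (leq_ltn_trans hx) // -e ltn_ord.
apply/existsP; exists (Ordinal hxa); rewrite eqxx /=.
by apply: hf h _ _ => //=; rewrite e.
Qed.

Lemma ferrers_tr a b (D : {set 'I_a * 'I_b}) : ferrers D -> ferrers (tr D).
Proof. move=> hf x x' y y'; rewrite !inE /= => h h1 h2; exact: hf h _ _. Qed.

Lemma square_tr a b (D : {set 'I_a * 'I_b}) m : square_in D m -> square_in (tr D) m.
Proof.
move=> hs i j hi hj; have [x [y [e1 [e2 h]]]] := hs j i hj hi.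
by exists y, x; rewrite inE.
Qed.

Lemma square_trK a b (D : {set 'I_a * 'I_b}) m : square_in (tr D) m -> square_in D m.
Proof.
move=> hs i j hi hj; have [x [y [e1 [e2 h]]]] := hs j i hj hi.
by exists y, x; move: h; rewrite inE.
Qed.

Lemma durfee_tr a b (D : {set 'I_a * 'I_b}) k :
  durfee_length_is D k -> durfee_length_is (tr D) k.
Proof.
move=> [h1 h2]; split; first exact: square_tr.
by move=> m /square_trK; apply: h2.
Qed.

Lemma no_kk a b (D : {set 'I_a * 'I_b}) k (x : 'I_a) (y : 'I_b) :
  ferrers D -> durfee_length_is D k -> (x, y) \in D -> (x < k) || (y < k).
Proof.
move=> hf [_ hd] h; rewrite ltnNge [y < k]ltnNge -negb_and; apply/negP => /andP[hx hy].
have : square_in D k.+1.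
  move=> i j hi hj.
  have hia : i < a by apply: leq_ltn_trans (ltn_ord x); lia.
  have hjb : j < b by apply: leq_ltn_trans (ltn_ord y); lia.
  exists (Ordinal hia), (Ordinal hjb); do 2! split => //.
  apply: hf h _ _ => /=; lia.
by move/hd; rewrite ltnn.
Qed.

Lemma ell_le a b (D : {set 'I_a * 'I_b}) x : ell D x <= b.
Proof. by rewrite /ell -[X in _ <= X](card_ord b) max_card. Qed.

Lemma ell_ge a b (D : {set 'I_a * 'I_b}) k x : ferrers D -> durfee_length_is D k ->
  x < k -> k <= ell D x.
Proof.
move=> hf [hs _] hx.
have [x' [y [e1 [e2 h]]]] := hs x k.-1 hx ltac:(lia).
have := ferrers_row x' y hf; rewrite h e2 => /esym; rewrite -e1.
rewrite /ell; lia.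
Qed.

Lemma ell_mono a b (D : {set 'I_a * 'I_b}) x x' : ferrers D -> x <= x' ->
  ell D x' <= ell D x.
Proof. by move=> hf hx; apply: subset_leq_card; apply: row_mono. Qed.
Set Implicit Arguments. Unset Strict Implicit. Unset Printing Implicit Defensive.

Definition mkt k (f : nat -> nat) : k.-tuple nat := @Tuple k nat (mkseq f k) (introT eqP (size_mkseq f k)).

Lemma tnth_mkt k f (i : 'I_k) : tnth (mkt k f) i = f i.
Proof. by rewrite (tnth_nth 0) /= nth_mkseq. Qed.

Definition vf a b (D : {set 'I_a * 'I_b}) k i := ell D (k.-1 - i) - (k.-1 - i).

Lemma vprop a b k (D : {set 'I_a * 'I_b}) : ferrers D /\ durfee_length_is D k ->
  sorted ltn (mkt k (vf D k)) /\ all (fun v => 1 <= v <= b) (mkt k (vf D k)).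
Proof.
move=> [hf hd]; split.
- apply/(sortedP 0) => i; rewrite /= size_mkseq => hi.
  rewrite !nth_mkseq ?(ltnW hi) // /vf.
  have h1 := @ell_mono _ _ D (k.-1 - i.+1) (k.-1 - i) hf ltac:(lia).
  have h3 := @ell_ge _ _ D k (k.-1 - i) hf hd ltac:(lia).
  rewrite /ltn /=; lia.
- rewrite /= /mkseq all_map; apply/allP => i; rewrite mem_iota add0n => /andP[_ hi] /=.
  rewrite /vf.
  have h3 := @ell_ge _ _ D k (k.-1 - i) hf hd ltac:(lia).
  have h4 := ell_le D (k.-1 - i).
  lia.
Qed.

Definition Fv a b k (D : Dk a b k) : Ck b k :=
  exist _ (mkt k (vf (proj1_sig D) k)) (vprop (proj2_sig D)).

Lemma Dk_tr a b k (D : {set 'I_a * 'I_b}) : ferrers D /\ durfee_length_is D k ->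
  ferrers (tr D) /\ durfee_length_is (tr D) k.
Proof. by move=> [h1 h2]; split; [apply: ferrers_tr | apply: durfee_tr]. Qed.

Definition Fu a b k (D : Dk a b k) : Ck a k :=
  exist _ (mkt k (vf (tr (proj1_sig D)) k)) (vprop (Dk_tr (proj2_sig D))).

Definition F a b k (D : Dk a b k) : Ck a k * Ck b k := (Fu D, Fv D).

Lemma le_vf a b k (D E : {set 'I_a * 'I_b}) :
  ferrers D /\ durfee_length_is D k -> ferrers E /\ durfee_length_is E k ->
  (forall i : 'I_k, vf D k i <= vf E k i) <-> (forall x, x < k -> ell D x <= ell E x).
Proof.
move=> [hfD hdD] [hfE hdE]; split => h.
- move=> x hx; have hi : k.-1 - x < k by lia.
  have := h (Ordinal hi); rewrite /vf /=.
  have -> : k.-1 - (k.-1 - x) = x by lia.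
  have := ell_ge hfD hdD hx; have := ell_ge hfE hdE hx; lia.
- move=> i; rewrite /vf; have hx : k.-1 - i < k by have := ltn_ord i; lia.
  have := h _ hx; lia.
Qed.

Lemma sub_iff a b k (D E : {set 'I_a * 'I_b}) :
  ferrers D /\ durfee_length_is D k -> ferrers E /\ durfee_length_is E k ->
  D \subset E <-> (forall x, x < k -> ell D x <= ell E x) /\
                  (forall x, x < k -> ell (tr D) x <= ell (tr E) x).
Proof.
move=> [hfD hdD] [hfE hdE]; split.
- move=> /subsetP hs; split => x _; apply: subset_leq_card; apply/subsetP => y;
  rewrite !inE => /existsP[z /andP[e h]]; apply/existsP; exists z; rewrite e /=.
  + exact: hs.
  + by move: h; rewrite !inE => /hs.
- move=> [h1 h2]; apply/subsetP => [[x y]] h.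
  case/orP: (no_kk hfD hdD h) => hk.
  + rewrite (ferrers_row x y hfE); rewrite (ferrers_row x y hfD) in h.
    exact: leq_trans h (h1 _ hk).
  + have : (y, x) \in tr D by rewrite inE.
    rewrite (ferrers_row y x (ferrers_tr hfD)) => h'.
    have : (y, x) \in tr E by rewrite (ferrers_row y x (ferrers_tr hfE)); exact: leq_trans h' (h2 _ hk).
    by rewrite inE.
Qed.

Lemma F_iso a b k (D E : Dk a b k) : Dk_le D E <-> CC_le (F D) (F E).
Proof.
case: D E => [D hD] [E hE]; rewrite /Dk_le /CC_le /Ck_le /=.
rewrite (sub_iff hD hE).
have eq1 := le_vf hD hE.
have eq2 := le_vf (Dk_tr hD) (Dk_tr hE).
split.
- move=> [h1 h2]; split => i; rewrite !tnth_mkt.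
  + by move: i; apply/eq2.
  + by move: i; apply/eq1.
- move=> [h1 h2]; split.
  + apply/eq1 => i; by have := h2 i; rewrite !tnth_mkt.
  + apply/eq2 => i; by have := h1 i; rewrite !tnth_mkt.
Qed.
Set Implicit Arguments. Unset Strict Implicit. Unset Printing Implicit Defensive.

Definition Gs a b k (u v : seq nat) : {set 'I_a * 'I_b} :=
  [set q : 'I_a * 'I_b | ((q.1 < k) && (q.2 < nth 0 v (k.-1 - q.1) + q.1)) ||
           ((q.2 < k) && (q.1 < nth 0 u (k.-1 - q.2) + q.2))].

Definition good n k (s : seq nat) := [/\ size s = k, sorted ltn s & all (fun v => 1 <= v <= n) s].

Lemma tr_Gs a b k u v : tr (Gs a b k u v) = Gs b a k v u.
Proof. by apply/setP => q; rewrite !inE /= orbC. Qed.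

Lemma G_ferrers a b k u v : good a k u -> good b k v -> ferrers (Gs a b k u v).
Proof.
move=> [su hsu hau] [sv hsv hav] x x' y y'; rewrite !inE /=.
case/orP => /andP[hx hy] hx' hy'; apply/orP; [left|right].
- have := seqL1 v (k.-1 - x) (x - x') hsv ltac:(lia).
  have -> : k.-1 - x + (x - x') = k.-1 - x' by lia.
  move=> h; apply/andP; split; lia.
- have := seqL1 u (k.-1 - y) (y - y') hsu ltac:(lia).
  have -> : k.-1 - y + (y - y') = k.-1 - y' by lia.
  move=> h; apply/andP; split; lia.
Qed.

Lemma G_durfee a b k u v : k <= a -> k <= b -> good b k v ->
  durfee_length_is (Gs a b k u v) k.
Proof.
move=> hka hkb [sv hsv hav]; split.
- move=> i j hi hj.
  have hia : i < a by lia.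
  have hjb : j < b by lia.
  exists (Ordinal hia), (Ordinal hjb); do 2! split => //.
  rewrite inE /=; apply/orP; left; rewrite hi /=.
  have := seqL2 v b (k.-1 - i) hsv hav ltac:(lia); lia.
- move=> m hm; rewrite leqNgt; apply/negP => hkm.
  have [x [y [e1 [e2]]]] := hm k k hkm hkm.
  by rewrite inE /= e1 e2 ltnn.
Qed.

Lemma row_G a b k u v x : good b k v -> x < k -> x < a ->
  ell (Gs a b k u v) x = nth 0 v (k.-1 - x) + x.
Proof.
move=> [sv hsv hav] hx hxa.
have h2 := seqL2 v b (k.-1 - x) hsv hav ltac:(lia).
have h3 := seqL3 v b (k.-1 - x) hsv hav ltac:(lia).
rewrite sv in h3; rewrite /ell.
have -> : row (Gs a b k u v) x = [set y : 'I_b | y < nth 0 v (k.-1 - x) + x].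
  apply/setP => y; have := in_row (Gs a b k u v) (Ordinal hxa) y; rewrite /= => ->.
  rewrite !inE /= hx /=; apply/orP/idP => [[h|/andP[h _]] | h]; [done | lia | by left].
rewrite card_lt //; lia.
Qed.

Lemma vf_G a b k u v : k <= a -> good b k v ->
  mkseq (vf (Gs a b k u v) k) k = v.
Proof.
move=> hka hv; have [sv _ _] := hv.
apply: (@eq_from_nth _ 0); first by rewrite size_mkseq sv.
move=> i; rewrite size_mkseq => hi; rewrite nth_mkseq // /vf row_G //; try lia.
have -> : k.-1 - (k.-1 - i) = i by lia.
lia.
Qed.

Lemma Ck_eq n k (x y : Ck n k) : proj1_sig x = proj1_sig y -> x = y.
Proof.
case: x y => [x [hx1 hx2]] [y [hy1 hy2]] /= e; subst y.
by rewrite (bool_irrelevance hx1 hy1) (bool_irrelevance hx2 hy2).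
Qed.

Lemma Dk_eq a b k (x y : Dk a b k) : proj1_sig x = proj1_sig y -> x = y.
Proof.
case: x y => [x hx] [y hy] /= e; subst y.
by rewrite (proof_irrelevance _ hx hy).
Qed.

Lemma good_Ck n k (x : Ck n k) : good n k (tval (proj1_sig x)).
Proof. case: x => [t [h1 h2]]; split => //; exact: size_tuple. Qed.

Lemma G_prop a b k (p : Ck a k * Ck b k) : k <= a -> k <= b ->
  ferrers (Gs a b k (tval (proj1_sig p.1)) (tval (proj1_sig p.2))) /\
  durfee_length_is (Gs a b k (tval (proj1_sig p.1)) (tval (proj1_sig p.2))) k.
Proof.
move=> hka hkb; split; first by apply: G_ferrers; apply: good_Ck.
by apply: G_durfee => //; apply: good_Ck.
Qed.

Definition Ginv a b k (hka : k <= a) (hkb : k <= b) (p : Ck a k * Ck b k) : Dk a b k :=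
  exist _ (Gs a b k (tval (proj1_sig p.1)) (tval (proj1_sig p.2))) (G_prop p hka hkb).

Lemma FG a b k (hka : k <= a) (hkb : k <= b) p : F (Ginv hka hkb p) = p.
Proof.
case: p => [pu pv]; rewrite /F; congr pair; apply: Ck_eq; apply: val_inj => /=.
- by rewrite tr_Gs; apply: vf_G => //; apply: good_Ck.
- by apply: vf_G => //; apply: good_Ck.
Qed.

Lemma CC_refl a b k p : @CC_le a b k p p.
Proof. by split => i. Qed.

Theorem proposition1p12 (a b k : nat) :
  (k <= minn a b)%N ->
  poset_iso (@Dk_le a b k) (@CC_le a b k).
Proof.
move=> hk; have hka : k <= a by move: hk; rewrite leq_min => /andP[].
have hkb : k <= b by move: hk; rewrite leq_min => /andP[].
exists (@F a b k); split; last exact: F_iso.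
exists (Ginv hka hkb); last exact: FG.
move=> D; apply: Dk_eq; apply/eqP; rewrite eqEsubset; apply/andP; split.
- have := F_iso (Ginv hka hkb (F D)) D; rewrite FG => [[_ h]]; exact: h (CC_refl _).
- have := F_iso D (Ginv hka hkb (F D)); rewrite FG => [[_ h]]; exact: h (CC_refl _).
Qed.
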